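(* Let $m$ be odd and let $n\in\mathbf{N}$. Let $\lambda$ be a partition of $mn$ and let $f:S^\lambda\to H^{(m^n)}$ be a homomorphism of $\mathbf{Z}S_{mn}$-modules. Let $t=t_\lambda$. Then there exist set families $\mathcal{P}_1,\dots,\mathcal{P}_k$ of shape $(m^n)$ and type $\lambda$ and integers $a_1,\dots,a_k$ such that $e_t f=a_1u_1b_t+\cdots+a_ku_kb_t$, where $u_i$ is the indexed set partition associated to $\mathcal{P}_i$.
   Context: A set family of shape $(m^n)$ is a collection of $n$ distinct $m$-subsets of $\mathbf{N}$; it has type $\lambda$ (largest part $a$, conjugate $\lambda'$) if for each $i\in\{1,\dots,a\}$ exactly $\lambda'_i$ of its sets contain $i$. Let $A(\lambda)=\{i_j:1\le i\le a,\ 1\le j\le\lambda'_i\}$ and identify $S_{mn}$ with $\mathrm{Sym}(A(\lambda))$, acting on the right. $H^{(m^n)}$ is the permutation $\mathbf{Z}S_{mn}$-module with basis the set partitions of $A(\lambda)$ into $n$ sets each of size $m$. $t_\lambda$ is the $\lambda$-tableau whose $i$-th column is $i_1,\dots,i_{\lambda'_i}$ top to bottom; $C(t)$ is the column stabilizer, $b_t=\sum_{\tau\in C(t)}\mathrm{sgn}(\tau)\tau$, $e_t=\{t\}b_t$ the polytabloid, and $S^\lambda$ the Specht module (span of polytabloids in the Young permutation module $M^\lambda$). The indexed set partition associated to a set family $\mathcal{P}=\{X_1<\dots<X_n\}$ (lexicographic order) of type $\lambda$ is obtained by giving each element of $X_1$ index $1$ and each $i\in X_r$ the smallest index not already appended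 to an $i$ in $X_1,\dots,X_{r-1}$. *)

(* Defs.v *)
From HB Require Import structures.
From mathcomp Require Import all_boot all_order all_algebra all_fingroup.
From mathcomp Require Import finmap.

Set Implicit Arguments.
Unset Strict Implicit.
Unset Printing Implicit Defensive.

Import GRing.Theory.

Definition is_partition (lam : seq nat) (N : nat) : bool :=
  [&& sorted geq lam, 0 \notin lam & sumn lam == N].

Definition largest (lam : seq nat) : nat := \max_(x <- lam) x.

Definition conjp (lam : seq nat) (i : nat) : nat := count (fun x => i <= x) lam.

(* length of row r (rows numbered from 1) *)
Definition rowlen (lam : seq nat) (r : nat) : nat :=
  if r is r'.+1 then nth 0 lam r' else 0.

Definition Bnd (lam : seq nat) : nat := (sumn lam).+1.

(* the pair (i, j) stands for the symbol i_j :  1 <= i <= a,  1 <= j <= lam'_i *)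
Definition inA (lam : seq nat) (p : 'I_(Bnd lam) * 'I_(Bnd lam)) : bool :=
  (1 <= p.1 <= largest lam) && (1 <= p.2 <= conjp lam p.1).

Definition Aset (lam : seq nat) := {p : 'I_(Bnd lam) * 'I_(Bnd lam) | inA p}.

(* i_j lies in column i and row j of t_lam *)
Definition colA (lam : seq nat) (x : Aset lam) : nat := (val x).1.
Definition rowA (lam : seq nat) (x : Aset lam) : 'I_(Bnd lam) := (val x).2.

(* S_{mn} = Sym(A(lam)), acting on the right: x . g = g x ;
   in mathcomp (g * h) x = h (g x), so this is a right action. *)

(* A lam-tableau with entries A(lam) is a bijection from the boxes of the
   Young diagram to A(lam); identifying the box (row j, column i) with i_j
   (i.e. with the entry of t_lam in that box), a tableau is a permutation
   sigma of A(lam): the box of i_j holds sigma(i_j).  t_lam = 1. *)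

(* a tabloid is recorded by the row in which each entry lies *)
Definition is_tabloid (lam : seq nat) (T : {ffun Aset lam -> 'I_(Bnd lam)}) : bool :=
  [forall r : 'I_(Bnd lam), #|[set x | T x == r]| == rowlen lam r].

Definition tabloid (lam : seq nat) := {T : {ffun Aset lam -> 'I_(Bnd lam)} | is_tabloid T}.

(* {t} g = {t g}: entry x.g lies in the row where x lay *)
Definition tab_act (lam : seq nat) (T : tabloid lam) (g : {perm Aset lam}) : tabloid lam :=
  insubd T [ffun x => val T ((g^-1)%g x)].

Definition Mmod (lam : seq nat) := {ffun tabloid lam -> int}.

Definition act_M (lam : seq nat) (v : Mmod lam) (g : {perm Aset lam}) : Mmod lam :=
  [ffun T => v (tab_act T (g^-1)%g)].

(* row function of the tabloid {sigma} of the tableau sigma *)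
Definition tabrow (lam : seq nat) (s : {perm Aset lam}) : {ffun Aset lam -> 'I_(Bnd lam)} :=
  [ffun x => rowA ((s^-1)%g x)].

Definition colstab (lam : seq nat) (s : {perm Aset lam}) : {set {perm Aset lam}} :=
  [set tau : {perm Aset lam} |
     [forall x, colA ((s^-1)%g (tau x)) == colA ((s^-1)%g x)]].

Definition sgn (lam : seq nat) (tau : {perm Aset lam}) : int := (-1) ^+ odd_perm tau.

(* polytabloid e_sigma = {sigma} b_sigma = sum_{tau in C(sigma)} sgn(tau) {sigma} tau *)
Definition polytab (lam : seq nat) (s : {perm Aset lam}) : Mmod lam :=
  [ffun T : tabloid lam => \sum_(tau in colstab s)
      sgn tau * (nat_of_bool (val T == [ffun x => tabrow s ((tau^-1)%g x)]))%:R]%R.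

Definition in_specht (lam : seq nat) (v : Mmod lam) : Prop :=
  exists (k : nat) (c : 'I_k -> int) (s : 'I_k -> {perm Aset lam}),
    v = (\sum_(i < k) polytab (s i) *~ c i)%R.

Definition is_setpart (m n : nat) (lam : seq nat) (P : {set {set Aset lam}}) : bool :=
  [&& partition P [set: Aset lam], #|P| == n & [forall B in P, #|B| == m]].

Definition setpart (m n : nat) (lam : seq nat) := {P : {set {set Aset lam}} | is_setpart m n P}.

Definition sp_act (m n : nat) (lam : seq nat) (P : setpart m n lam) (g : {perm Aset lam})
  : setpart m n lam :=
  insubd P [set [set g x | x in B] | B : {set Aset lam} in val P].

Definition Hmod (m n : nat) (lam : seq nat) := {ffun setpart m n lam -> int}.

Definition act_H (m n : nat) (lam : seq nat) (v : Hmod m n lam) (g : {perm Aset lam})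
  : Hmod m n lam :=
  [ffun P => v (sp_act P (g^-1)%g)].

Definition delta (m n : nat) (lam : seq nat) (Q : {set {set Aset lam}}) : Hmod m n lam :=
  [ffun P : setpart m n lam => (nat_of_bool (val P == Q))%:R]%R.

Definition bt_H (m n : nat) (lam : seq nat) (v : Hmod m n lam) : Hmod m n lam :=
  (\sum_(tau in colstab (1%g : {perm Aset lam})) act_H v tau *~ sgn tau)%R.

Definition is_hom (m n : nat) (lam : seq nat) (f : Mmod lam -> Hmod m n lam) : Prop :=
  (forall v w, in_specht v -> in_specht w -> f (v + w)%R = (f v + f w)%R) /\
  (forall v g, in_specht v -> f (act_M v g) = act_H (f v) g).

Local Open Scope fset_scope.

Definition family_of (m n : nat) (lam : seq nat) (P : {fset {fset nat}}) : Prop :=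
  [/\ #|` P| = n,
      (forall X, X \in P -> #|` X| = m) &
      (forall i, 1 <= i <= largest lam -> #|` [fset X in P | i \in X]| = conjp lam i)].

Fixpoint lexle (s t : seq nat) : bool :=
  match s, t with
  | [::], _ => true
  | _ :: _, [::] => false
  | x :: s', y :: t' => (x < y) || ((x == y) && lexle s' t')
  end.

Definition setkey (X : {fset nat}) : seq nat := sort leq X.

Definition sorted_family (P : {fset {fset nat}}) : seq {fset nat} :=
  sort (fun X Y => lexle (setkey X) (setkey Y)) P.

(* the index attached to i in X_r is the smallest index not already attached
   to an i in X_1, ..., X_{r-1}, i.e. #{ s <= r | i \in X_s } *)
Definition indexed_blocks (P : {fset {fset nat}}) : seq (seq (nat * nat)) :=
  let Xs := sorted_family P in
  [seq [seq (i, count (fun Y : {fset nat} => i \in Y) (take r.+1 Xs))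
         | i <- (nth fset0 Xs r : seq nat)] | r <- iota 0 (size Xs)].

Definition indexed_sp (lam : seq nat) (P : {fset {fset nat}}) : {set {set Aset lam}} :=
  \bigcup_(B <- indexed_blocks P)
     [set [set x : Aset lam | ((val x).1 : nat, (val x).2 : nat) \in B]].

(* Main.v *)
Require Import Defs.
From HB Require Import structures.
From mathcomp Require Import all_boot all_order all_algebra all_fingroup.
From mathcomp Require Import finmap.
From mathcomp Require Import zify.
From Stdlib Require Import Classical.

Set Implicit Arguments.
Unset Strict Implicit.
Unset Printing Implicit Defensive.

Section ListLemmas.
Variables (T : Type) (x0 : T) (p : pred T).

Lemma cnt_take_mono (s : seq T) k k' : k <= k' ->
  count p (take k s) <= count p (take k' s).
Proof.
move=> /subnKC <-; rewrite takeD count_cat; exact: leq_addr.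
Qed.

Lemma cnt_take_S (s : seq T) r : r < size s ->
  count p (take r.+1 s) = count p (take r s) + p (nth x0 s r).
Proof.
by move=> hr; rewrite (take_nth x0 hr) -cats1 count_cat /= addn0.
Qed.

Lemma cnt_le (s : seq T) k : count p (take k s) <= count p s.
Proof. by rewrite -{2}(cat_take_drop k s) count_cat leq_addr. Qed.

Lemma cnt_pos (s : seq T) r : r < size s -> p (nth x0 s r) ->
  0 < count p (take r.+1 s).
Proof. by move=> hr hp; rewrite (cnt_take_S hr) hp addn1. Qed.

Lemma cnt_lt (s : seq T) r1 r2 : r1 < r2 -> r2 < size s -> p (nth x0 s r2) ->
  count p (take r1.+1 s) < count p (take r2.+1 s).
Proof.
move=> h12 h2 hp; rewrite (cnt_take_S h2) hp addn1 ltnS.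
exact: cnt_take_mono.
Qed.

Lemma cnt_inj (s : seq T) r1 r2 : r1 < size s -> r2 < size s ->
  p (nth x0 s r1) -> p (nth x0 s r2) ->
  count p (take r1.+1 s) = count p (take r2.+1 s) -> r1 = r2.
Proof.
move=> h1 h2 p1 p2 e.
case: (ltngtP r1 r2) => // h.
  by have := cnt_lt h h2 p2; rewrite e ltnn.
by have := cnt_lt h h1 p1; rewrite e ltnn.
Qed.
End ListLemmas.

Section Main.
Variable lam : seq nat.
Local Notation A := (Aset lam).
Hypothesis lam0 : 0 \notin lam.

Definition rowN (x : A) : nat := rowA x.

Lemma largest_le : largest lam <= sumn lam.
Proof.
rewrite /largest; elim: lam => [|a l IH]; first by rewrite big_nil.
by rewrite big_cons /= geq_max leq_addr /= (leq_trans IH) // leq_addl.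
Qed.

Lemma size_le : size lam <= sumn lam.
Proof.
move: lam0; elim: lam => [//|a l IH]; rewrite inE negb_or => /andP[a0 l0] /=.
have := IH l0; move: a0; rewrite eq_sym -lt0n; lia.
Qed.

Lemma conjp_le i : conjp lam i <= sumn lam.
Proof. exact: leq_trans (count_size _ _) size_le. Qed.

Lemma A_bounds (x : A) :
  1 <= colA x <= largest lam /\ 1 <= rowN x <= conjp lam (colA x).
Proof. by have /andP[h1 h2] := valP x. Qed.

Lemma mkA i j : 1 <= i <= largest lam -> 1 <= j <= conjp lam i ->
  exists x : A, colA x = i /\ rowN x = j.
Proof.
move=> hi hj.
have ei : i < Bnd lam by rewrite /Bnd ltnS; case/andP: hi => _ h; exact: leq_trans h largest_le.
have ej : j < Bnd lam by rewrite /Bnd ltnS; case/andP: hj => _ h; exact: leq_trans h (conjp_le i).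
have h : inA (inord i : 'I_(Bnd lam), inord j : 'I_(Bnd lam)).
  by rewrite /inA /= !inordK // hi.
by exists (Sub _ h); rewrite /colA /rowN /rowA /= !inordK.
Qed.

Lemma card_col i : 1 <= i <= largest lam ->
  #|[set x : A | colA x == i]| = conjp lam i.
Proof.
move=> hi; set S := [set x : A | colA x == i].
have hu : uniq (map rowN (enum S)).
  rewrite map_inj_in_uniq ?enum_uniq // => x y; rewrite !mem_enum !inE => /eqP hx /eqP hy hr.
  apply: val_inj; case: x y hx hy hr => [[a b] ?] [[c d] ?] /=.
  rewrite /colA /rowN /rowA /= => h1 h2 h3.
  by congr pair; apply: val_inj => //=; rewrite h1 h2.
have hp : perm_eq (map rowN (enum S)) (iota 1 (conjp lam i)).
  apply: uniq_perm => //; first exact: iota_uniq.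
  move=> j; rewrite mem_iota; apply/mapP/idP.
    case=> x; rewrite mem_enum inE => /eqP hx ->.
    have [_ /andP[h1 h2]] := A_bounds x; rewrite hx in h2; lia.
  move=> hj; have [x [hx hr]] : exists x : A, colA x = i /\ rowN x = j.
    by apply: mkA => //; lia.
  by exists x => //; rewrite mem_enum inE hx.
by rewrite cardE -(size_map rowN) (perm_size hp) size_iota.
Qed.


Definition Cs := colstab (1%g : {perm A}).

Lemma inCP (t : {perm A}) : reflect (forall x, colA (t x) = colA x) (t \in Cs).
Proof.
rewrite /Cs /colstab inE invg1; apply: (iffP forallP) => h x.
  by have /eqP := h x; rewrite !perm1.
by rewrite !perm1 h.
Qed.

Lemma C1 : (1%g : {perm A}) \in Cs.
Proof. by apply/inCP => x; rewrite perm1. Qed.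

Lemma CM s t : s \in Cs -> t \in Cs -> (s * t)%g \in Cs.
Proof. by move=> /inCP hs /inCP ht; apply/inCP => x; rewrite permM ht hs. Qed.

Lemma CV s : s \in Cs -> (s^-1)%g \in Cs.
Proof.
move=> /inCP hs; apply/inCP => x.
by rewrite -{2}(permKV s x) hs.
Qed.

Lemma Ctperm x y : colA x = colA y -> tperm x y \in Cs.
Proof.
move=> h; apply/inCP => z; case: tpermP => // -> //.
Qed.

Definition colset (B : {set A}) : {fset nat} := [fset i in map (@colA lam) (enum B)]%fset.

Lemma mem_colset i (B : {set A}) : reflect (exists2 x, x \in B & colA x = i) (i \in colset B).
Proof.
rewrite /colset in_fset /=; apply: (iffP mapP).
  by case=> x; rewrite mem_enum => hx ->; exists x.
by case=> x hx <-; exists x; rewrite ?mem_enum.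
Qed.

Definition cf (P : {set {set A}}) : {fset {fset nat}} := [fset X in map colset (enum P)]%fset.

Lemma mem_cf X (P : {set {set A}}) : reflect (exists2 B, B \in P & X = colset B) (X \in cf P).
Proof.
rewrite /cf in_fset /=; apply: (iffP mapP).
  by case=> B; rewrite mem_enum => hB ->; exists B.
by case=> B hB ->; exists B; rewrite ?mem_enum.
Qed.

Definition good (P : {set {set A}}) : Prop :=
  (forall B x y, B \in P -> x \in B -> y \in B -> colA x = colA y -> x = y) /\
  (forall B B', B \in P -> B' \in P -> colset B = colset B' -> B = B').

Definition goodb (P : {set {set A}}) : bool :=
  [forall B : {set A}, (B \in P) ==> [forall x, [forall y,
     [&& x \in B, y \in B & colA x == colA y] ==> (x == y)]]] &&
  [forall B : {set A}, forall B' : {set A},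
     [&& B \in P, B' \in P & colset B == colset B'] ==> (B == B')].

Lemma goodP P : reflect (good P) (goodb P).
Proof.
apply: (iffP andP) => [[/forallP h1 /forallP h2]|[h1 h2]]; split.
- move=> B x y hB hx hy hc; have := h1 B; rewrite hB /= => /forallP/(_ x)/forallP/(_ y).
  by rewrite hx hy hc eqxx /= => /eqP.
- move=> B B' hB hB' hc; have /forallP/(_ B') := h2 B.
  by rewrite hB hB' hc eqxx /= => /eqP.
- apply/forallP => B; apply/implyP => hB; apply/forallP => x; apply/forallP => y.
  by apply/implyP => /and3P[hx hy /eqP hc]; apply/eqP; exact: h1 hx hy hc.
- apply/forallP => B; apply/forallP => B'.
  by apply/implyP => /and3P[hB hB' /eqP hc]; apply/eqP; exact: h2.
Qed.

Definition spimg (g : {perm A}) (P : {set {set A}}) : {set {set A}} :=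
  [set [set g x | x in B] | B : {set A} in P].

Lemma colset_img t (B : {set A}) : t \in Cs -> colset [set t x | x in B] = colset B.
Proof.
move=> /inCP ht; apply/fsetP => i; apply/mem_colset/mem_colset.
  by case=> y /imsetP[x hx ->] <-; exists x; rewrite ?ht.
by case=> x hx <-; exists (t x); rewrite ?ht ?imset_f.
Qed.

Lemma cf_img t P : t \in Cs -> cf (spimg t P) = cf P.
Proof.
move=> ht; apply/fsetP => X; apply/mem_cf/mem_cf.
  by case=> B' /imsetP[B hB ->] ->; exists B; rewrite ?colset_img.
by case=> B hB ->; exists [set t x | x in B]; rewrite ?colset_img ?imset_f.
Qed.

Lemma good_img t P : t \in Cs -> good P -> good (spimg t P).
Proof.
move=> ht [h1 h2]; split.
  move=> B' x' y' /imsetP[B hB ->] /imsetP[x hx ->] /imsetP[y hy ->].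
  by move/inCP: ht => ht; rewrite !ht => hc; rewrite (h1 B x y).
move=> B1' B2' /imsetP[B1 h1B ->] /imsetP[B2 h2B ->].
by rewrite !colset_img // => hc; rewrite (h2 B1 B2).
Qed.

Lemma spimg_comp g h P : spimg h (spimg g P) = spimg (g * h)%g P.
Proof.
rewrite /spimg -imset_comp; apply: eq_imset => B /=.
by rewrite -imset_comp; apply: eq_imset => x /=; rewrite permM.
Qed.

Lemma spimg1 P : spimg 1%g P = P.
Proof.
rewrite /spimg -[RHS]imset_id; apply: eq_imset => B /=.
by rewrite -[RHS]imset_id; apply: eq_imset => x; rewrite perm1.
Qed.

Lemma imset_perm_setT (g : {perm A}) : [set g x | x in [set: A]] = [set: A].
Proof.
apply/eqP; rewrite eqEcard subsetT /= card_imset //; exact: perm_inj.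
Qed.

Lemma is_setpart_img m n g P : is_setpart m n P -> is_setpart m n (spimg g P).
Proof.
case/and3P=> hp hn hm; apply/and3P; split.
- by rewrite /spimg -(imset_perm_setT g) imset_partition //; exact: perm_inj.
- rewrite /spimg card_imset //; apply: imset_inj; exact: perm_inj.
- apply/forallP => B'; apply/implyP => /imsetP[B hB ->].
  rewrite card_imset; last exact: perm_inj.
  by have /forallP/(_ B) := hm; rewrite hB.
Qed.


Lemma img_eq (f : {perm A}) (D X : {set A}) :
  {in D, forall x, f x \in X} -> #|X| <= #|D| -> [set f x | x in D] = X.
Proof.
move=> h hc; apply/eqP; rewrite eqEcard card_imset ?hc ?andbT; last exact: perm_inj.
by apply/subsetP => y /imsetP[x hx ->]; exact: h.
Qed.

Lemma tperm_set (x y : A) (S : {set A}) : (x \in S) = (y \in S) -> [set tperm x y z | z in S] = S.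
Proof.
move=> hxy; apply: img_eq => // z hz.
by case: tpermP => [e|e|_] //; [rewrite -hxy -e | rewrite hxy -e].
Qed.

Definition tprod (g : A -> A) (l : seq A) : {perm A} :=
  foldr (fun z acc => (tperm z (g z) * acc)%g) 1%g l.

Lemma tprod_spec g l : uniq l -> {in l &, injective g} -> (forall z, z \in l -> g z \notin l) ->
  [/\ forall z, z \in l -> tprod g l z = g z,
      forall z, z \in l -> tprod g l (g z) = z &
      forall w, w \notin l -> w \notin map g l -> tprod g l w = w].
Proof.
elim: l => [|z l IH] /=.
  by move=> _ _ _; split => // w _ _; rewrite perm1.
move=> /andP[zl ul] ig dg.
have ig' : {in l &, injective g} by move=> a b ha hb; apply: ig; rewrite inE ?ha ?hb orbT.
have dg' : forall z, z \in l -> g z \notin l.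
  by move=> a ha; have := dg a; rewrite !inE ha orbT => /(_ isT); rewrite negb_or => /andP[].
have [I1 I2 I3] := IH ul ig' dg'.
have gzl : g z \notin z :: l by apply: dg; rewrite inE eqxx.
rewrite inE negb_or in gzl; case/andP: gzl => gzz gzl.
have gzm : g z \notin map g l.
  apply/mapP => [[a ha /ig]]; rewrite !inE ha eqxx orbT => /(_ isT isT) eza.
  by move: zl; rewrite eza ha.
have zm : z \notin map g l.
  apply/mapP => [[a ha eza]]; have := dg' a ha; rewrite -eza.
  have := dg a; rewrite !inE ha orbT -eza eqxx /= => /(_ isT) //.
split.
- move=> w; rewrite inE => /orP[/eqP ->|hw]; rewrite permM.
    by rewrite tpermL I3.
  rewrite tpermD ?I1 //.
    by apply/eqP => e; move: zl; rewrite e hw.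
  by apply/eqP => e; move: gzl; rewrite e hw.
- move=> w; rewrite inE => /orP[/eqP ->|hw]; rewrite permM.
    by rewrite tpermR I3.
  rewrite tpermD ?I2 //.
    apply/eqP => e; have := dg w; rewrite !inE hw orbT -e eqxx /=.
    by move=> /(_ isT).
  apply/eqP => e; have := ig z w; rewrite !inE eqxx hw orbT => /(_ isT isT e) ezw.
  by move: zl; rewrite ezw hw.
- move=> w; rewrite inE negb_or => /andP[wz wl] /= wm; rewrite inE negb_or in wm.
  case/andP: wm => wgz wm; rewrite permM tpermD ?I3 //; by rewrite eq_sym.
Qed.


Lemma tprod_odd g l : (forall z, z \in l -> z != g z) -> odd_perm (tprod g l) = odd (size l).
Proof.
elim: l => [|z l IH] h /=; first by rewrite odd_perm1.
rewrite odd_mul_tperm h ?inE ?eqxx // IH; first by case: (odd _).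
by move=> a ha; apply: h; rewrite inE ha orbT.
Qed.

Lemma tprod_C g l : (forall z, z \in l -> colA (g z) = colA z) -> tprod g l \in Cs.
Proof.
elim: l => [|z l IH] h /=; first exact: C1.
apply: CM; first by apply: Ctperm; rewrite h ?inE ?eqxx.
by apply: IH => a ha; apply: h; rewrite inE ha orbT.
Qed.

Section SP.
Variables m n : nat.
Local Notation Sp := (setpart m n lam).

Lemma sp_act_val (Q : Sp) g : val (sp_act Q g) = spimg g (val Q).
Proof. by rewrite /sp_act insubdK // -topredE /=; apply: is_setpart_img; exact: valP. Qed.

Lemma sp_act_comp (Q : Sp) g h : sp_act (sp_act Q g) h = sp_act Q (g * h)%g.
Proof. by apply: val_inj; rewrite !sp_act_val spimg_comp. Qed.

Lemma sp_act1 (Q : Sp) : sp_act Q 1%g = Q.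
Proof. by apply: val_inj; rewrite sp_act_val spimg1. Qed.

Lemma sp_part (Q : Sp) : partition (val Q) [set: A].
Proof. by case/and3P: (valP Q). Qed.

Lemma sp_triv (Q : Sp) : trivIset (val Q).
Proof. by case/and3P: (sp_part Q). Qed.

Lemma sp_cover (Q : Sp) x : x \in cover (val Q).
Proof. by case/and3P: (sp_part Q) => /eqP ->; rewrite inE. Qed.

Lemma sp_card (Q : Sp) B : B \in val Q -> #|B| = m.
Proof. by case/and3P: (valP Q) => _ _ /forallP/(_ B) h hB; move: h; rewrite hB => /eqP. Qed.

Lemma sp_n (Q : Sp) : #|val Q| = n.
Proof. by case/and3P: (valP Q) => _ /eqP. Qed.

Lemma sp_pblock (Q : Sp) x : pblock (val Q) x \in val Q.
Proof. exact: pblock_mem (sp_cover Q x). Qed.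

Lemma sp_inpblock (Q : Sp) x : x \in pblock (val Q) x.
Proof. by rewrite mem_pblock sp_cover. Qed.

Lemma sp_blockE (Q : Sp) B x : B \in val Q -> x \in B -> pblock (val Q) x = B.
Proof. by move=> hB hx; apply: def_pblock => //; exact: sp_triv. Qed.

Lemma stab_trivial (Q : Sp) t : good (val Q) -> t \in Cs -> spimg t (val Q) = val Q -> t = 1%g.
Proof.
move=> [g1 g2] ht he; apply/permP => x; rewrite perm1.
set B := pblock (val Q) x.
have hB : B \in val Q := sp_pblock Q x.
have hB' : [set t y | y in B] \in val Q by rewrite -he; apply: imset_f.
have eB : [set t y | y in B] = B by apply: g2 => //; rewrite colset_img.
apply: (g1 B) => //; last by move/inCP: ht.
  by rewrite -eB imset_f // sp_inpblock.
exact: sp_inpblock.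
Qed.


Lemma spimg_eq (t : {perm A}) (P : {set {set A}}) : (forall D, D \in P -> [set t x | x in D] \in P) -> spimg t P = P.
Proof.
move=> h; apply/eqP; rewrite eqEcard /spimg card_imset; last by apply: imset_inj; exact: perm_inj.
rewrite leqnn andbT; apply/subsetP => D' /imsetP[D hD ->]; exact: h.
Qed.

Lemma sp_inB (Q : Sp) B x : B \in val Q -> (x \in B) = (pblock (val Q) x == B).
Proof.
move=> hB; apply/idP/eqP => [hx|<-]; first exact: sp_blockE.
exact: sp_inpblock.
Qed.

Lemma badA (Q : Sp) B x y : B \in val Q -> x \in B -> y \in B ->
  spimg (tperm x y) (val Q) = val Q.
Proof.
move=> hB hx hy; apply: spimg_eq => D hD; rewrite tperm_set //.
by rewrite !(sp_inB _ hD) (sp_blockE hB hx) (sp_blockE hB hy).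
Qed.

Lemma badB (Q : Sp) B B' : odd m ->
  (forall B x y, B \in val Q -> x \in B -> y \in B -> colA x = colA y -> x = y) ->
  B \in val Q -> B' \in val Q -> B != B' -> colset B = colset B' ->
  exists s, [/\ s \in Cs, odd_perm s & spimg s (val Q) = val Q].
Proof.
move=> om g1 hB hB' nBB' hc.
pose g z := odflt z [pick y in B' | colA y == colA z].
have gP z : z \in B -> g z \in B' /\ colA (g z) = colA z.
  move=> hz; rewrite /g; case: pickP => [y /andP[hy /eqP hcy]|none] //=.
  have : colA z \in colset B' by rewrite -hc; apply/mem_colset; exists z.
  by case/mem_colset => y hy hcy; have := none y; rewrite hy hcy eqxx.
have dis x : x \in B -> x \notin B'.
  move=> hx; apply/negP => hx'; move: nBB'.
  by rewrite -(sp_blockE hB hx) -(sp_blockE hB' hx') eqxx.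
have ul : uniq (enum B) := enum_uniq _.
have ig : {in enum B &, injective g}.
  move=> a b; rewrite !mem_enum => ha hb e.
  have [ga ca] := gP a ha; have [gb cb] := gP b hb.
  by apply: (g1 B) => //; rewrite -ca -cb e.
have dg : forall z, z \in enum B -> g z \notin enum B.
  move=> z; rewrite !mem_enum => hz; have [gz _] := gP z hz.
  by apply/negP => h; move: (dis _ h); rewrite gz.
have [I1 I2 I3] := tprod_spec ul ig dg.
exists (tprod g (enum B)); split.
- by apply: tprod_C => z; rewrite mem_enum => hz; case: (gP z hz).
- rewrite tprod_odd -?cardE ?(sp_card hB) // => z; rewrite mem_enum => hz.
  by apply/eqP => e; have [gz _] := gP z hz; move: (dis _ hz); rewrite {1}e gz.
apply: spimg_eq => D hD.
case: (eqVneq D B) => [->|nDB].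
  rewrite (img_eq (X := B')) //; last by rewrite (sp_card hB) (sp_card hB').
  by move=> z hz; rewrite I1 ?mem_enum //; case: (gP z hz).
case: (eqVneq D B') => [->|nDB'].
  rewrite (img_eq (X := B)) //; last by rewrite (sp_card hB) (sp_card hB').
  move=> w hw.
  have : colA w \in colset B by rewrite hc; apply/mem_colset; exists w.
  case/mem_colset => z hz hcz; have [gz cgz] := gP z hz.
  have -> : w = g z by apply: (g1 B') => //; rewrite cgz.
  by rewrite I2 ?mem_enum.
rewrite (img_eq (X := D)) // => w hw.
have wB : w \notin B by rewrite (sp_inB _ hB) (sp_blockE hD hw).
have wB' : w \notin B' by rewrite (sp_inB _ hB') (sp_blockE hD hw).
rewrite I3 ?mem_enum //; apply/mapP => [[z]]; rewrite mem_enum => hz e.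
by case: (gP z hz) => gz _; move: wB'; rewrite e gz.
Qed.

Lemma bad_stab (Q : Sp) : odd m -> ~ good (val Q) ->
  exists s, [/\ s \in Cs, odd_perm s & spimg s (val Q) = val Q].
Proof.
move=> om ng.
case: (classic (exists B x y, [/\ B \in val Q, x \in B, y \in B, colA x = colA y & x != y])).
  case=> B [x [y [hB hx hy hc nxy]]]; exists (tperm x y); split.
  - exact: Ctperm.
  - by rewrite odd_tperm nxy.
  - exact: badA hB hx hy.
move=> n1.
have g1 : forall B x y, B \in val Q -> x \in B -> y \in B -> colA x = colA y -> x = y.
  move=> B x y hB hx hy hc; case: (eqVneq x y) => // nxy.
  by case: n1; exists B, x, y.
case: (classic (exists B B', [/\ B \in val Q, B' \in val Q, B != B' & colset B = colset B'])).
  by case=> B [B' [hB hB' nBB' hc]]; exact: badB om g1 hB hB' nBB' hc.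
move=> n2; case: ng; split => // B B' hB hB' hc.
by case: (eqVneq B B') => // nBB'; case: n2; exists B, B'.
Qed.


Lemma A_eq (x y : A) : colA x = colA y -> rowN x = rowN y -> x = y.
Proof.
case: x y => [[a b] ?] [[c d] ?] /=; rewrite /colA /rowN /rowA /= => h1 h2.
by apply: val_inj => /=; congr pair; apply: val_inj.
Qed.

Lemma count_blocks (Q : Sp) i : good (val Q) ->
  count (fun B => i \in colset B) (enum (val Q)) = #|[set x : A | colA x == i]|.
Proof.
move=> [g1 g2]; set S := [set x : A | colA x == i].
rewrite -size_filter cardE -(size_map (pblock (val Q))); apply: perm_size.
apply: uniq_perm; first by rewrite filter_uniq ?enum_uniq.
  rewrite map_inj_in_uniq ?enum_uniq // => x y; rewrite !mem_enum !inE => /eqP hx /eqP hy e.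
  apply: (g1 (pblock (val Q) x)); rewrite ?sp_pblock ?sp_inpblock ?e ?sp_inpblock //.
  by rewrite hx hy.
move=> B; rewrite mem_filter mem_enum; apply/andP/mapP.
  case=> /mem_colset[x hx hcx] hB; exists x; first by rewrite mem_enum inE hcx.
  by rewrite (sp_blockE hB hx).
case=> x; rewrite mem_enum inE => /eqP hx ->; split; last exact: sp_pblock.
by apply/mem_colset; exists x => //; exact: sp_inpblock.
Qed.

Lemma cf_enum_perm (Q : Sp) : good (val Q) ->
  perm_eq (enum_fset (cf (val Q))) (map colset (enum (val Q))).
Proof.
move=> [g1 g2]; apply: uniq_perm; first exact: fset_uniq.
  rewrite map_inj_in_uniq ?enum_uniq // => B B'; rewrite !mem_enum; exact: g2.
by move=> X; rewrite /cf in_fset.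
Qed.

Lemma family_cf (Q : Sp) : good (val Q) -> family_of m n lam (cf (val Q)).
Proof.
move=> gQ; have [g1 g2] := gQ; split.
- rewrite /cf card_fseq undup_id ?size_map -?cardE ?sp_n //.
  rewrite map_inj_in_uniq ?enum_uniq // => B B'; rewrite !mem_enum; exact: g2.
- move=> X /mem_cf[B hB ->]; rewrite /colset card_fseq undup_id ?size_map -?cardE; first exact: sp_card hB.
  rewrite map_inj_in_uniq ?enum_uniq // => x y; rewrite !mem_enum => hx hy; exact: g1 hB hx hy.
move=> i hi.
pose s : seq {fset nat} := filter (fun X : {fset nat} => i \in X) (map colset (enum (val Q))).
have -> : [fset X in cf (val Q) | i \in X]%fset = [fset X in s]%fset.
  by apply/fsetP => X; rewrite !inE andbC; exact: esym (mem_filter _ _ _).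
transitivity (size (undup s)); first exact: card_fseq.
rewrite undup_id; last by rewrite filter_uniq // -(perm_uniq (cf_enum_perm gQ)) fset_uniq.
by rewrite size_filter count_map count_blocks // card_col.
Qed.


Lemma mem_bigcup_seq (T : eqType) (f : T -> {set A}) (s : seq T) (S : {set A}) :
  (S \in \bigcup_(B <- s) [set f B]) = (S \in map f s).
Proof.
elim: s => [|b s IH]; first by rewrite big_nil inE.
by rewrite big_cons in_setU in_set1 IH inE.
Qed.

Section Constr.
Variable Q : Sp.
Hypothesis gQ : good (val Q).

Definition Xs := sorted_family (cf (val Q)).
Definition cnt i r := count (fun Y : {fset nat} => i \in Y) (take r.+1 Xs).
Definition rix (x : A) := index (colset (pblock (val Q) x)) Xs.
Definition BL r := [seq (i, cnt i r) | i <- (nth fset0 Xs r : seq nat)].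
Definition SS r := [set x : A | (((val x).1 : nat), ((val x).2 : nat)) \in BL r].

Lemma XsU : uniq Xs.
Proof. by rewrite /Xs /sorted_family sort_uniq fset_uniq. Qed.

Lemma memXs X : (X \in Xs) = (X \in cf (val Q)).
Proof. by rewrite /Xs /sorted_family mem_sort. Qed.

Lemma countXs i : count (fun Y : {fset nat} => i \in Y) Xs = #|[set x : A | colA x == i]|.
Proof.
have h : perm_eq Xs (map colset (enum (val Q))).
  by rewrite /Xs /sorted_family perm_sort; exact: cf_enum_perm.
by rewrite (seq.permP h) count_map count_blocks.
Qed.

Lemma rix_lt x : rix x < size Xs.
Proof. by rewrite /rix index_mem memXs; apply/mem_cf; exists (pblock (val Q) x); rewrite ?sp_pblock. Qed.

Lemma nth_rix x : nth fset0 Xs (rix x) = colset (pblock (val Q) x).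
Proof. by rewrite /rix nth_index // memXs; apply/mem_cf; exists (pblock (val Q) x); rewrite ?sp_pblock. Qed.

Lemma col_rix x : colA x \in nth fset0 Xs (rix x).
Proof. by rewrite nth_rix; apply/mem_colset; exists x => //; exact: sp_inpblock. Qed.

Lemma cnt_bounds x : 0 < cnt (colA x) (rix x) <= conjp lam (colA x).
Proof.
apply/andP; split; first exact: (cnt_pos (x0 := fset0) (rix_lt x) (col_rix x)).
apply: leq_trans (cnt_le _ _ _) _.
rewrite countXs card_col //; by case: (A_bounds x).
Qed.

Definition tauf (x : A) : A :=
  insubd x (inord (colA x) : 'I_(Bnd lam), inord (cnt (colA x) (rix x)) : 'I_(Bnd lam)).

Lemma tauf_spec x : colA (tauf x) = colA x /\ rowN (tauf x) = cnt (colA x) (rix x).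
Proof.
have [hc _] := A_bounds x; have hr := cnt_bounds x.
have e1 : colA x < Bnd lam.
  by rewrite /Bnd ltnS; case/andP: hc => _ h; exact: leq_trans h (largest_le).
have e2 : cnt (colA x) (rix x) < Bnd lam.
  by rewrite /Bnd ltnS; case/andP: hr => _ h; exact: leq_trans h (conjp_le _).
have hA : inA (inord (colA x) : 'I_(Bnd lam), inord (cnt (colA x) (rix x)) : 'I_(Bnd lam)).
  by rewrite /inA /= !inordK // hc.
by rewrite /tauf /colA /rowN /rowA (insubdK x hA) /= !inordK.
Qed.

Lemma tauf_inj : injective tauf.
Proof.
have [g1 g2] := gQ.
move=> x y e; have [cx rx] := tauf_spec x; have [cy ry] := tauf_spec y.
have hc : colA x = colA y by rewrite -cx -cy e.
have hr : rix x = rix y.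
  apply: (cnt_inj (x0 := fset0) (p := fun Y : {fset nat} => colA x \in Y) (rix_lt x) (rix_lt y)).
  - exact: col_rix.
  - by rewrite hc; exact: col_rix.
  by have := rx; rewrite e ry hc.
have hb : pblock (val Q) x = pblock (val Q) y.
  by apply: g2; rewrite ?sp_pblock // -!nth_rix hr.
apply: (g1 (pblock (val Q) x)) => //; rewrite ?sp_pblock ?sp_inpblock // hb; exact: sp_inpblock.
Qed.

Definition tau : {perm A} := perm tauf_inj.

Lemma tau_C : tau \in Cs.
Proof. by apply/inCP => x; rewrite permE; case: (tauf_spec x). Qed.

Lemma memSS r x : (x \in SS r) = (colA x \in nth fset0 Xs r) && (rowN x == cnt (colA x) r).
Proof.
rewrite inE /BL; apply/mapP/andP.
  by case=> i hi [e1 e2]; rewrite /colA /rowN /rowA e1 e2 hi eqxx.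
by case=> h1 /eqP h2; exists (colA x) => //; rewrite -h2.
Qed.

Lemma mem_isp S : reflect (exists2 r, r < size Xs & S = SS r) (S \in indexed_sp lam (cf (val Q))).
Proof.
rewrite /indexed_sp /indexed_blocks /= mem_bigcup_seq -map_comp.
apply: (iffP mapP).
  by case=> r; rewrite mem_iota add0n => hr ->; exists r.
by case=> r hr ->; exists r; rewrite ?mem_iota.
Qed.

Lemma img_block B : B \in val Q -> [set tau x | x in B] = SS (index (colset B) Xs).
Proof.
move=> hB; have [g1 g2] := gQ.
apply/setP => y; apply/imsetP/idP.
  case=> x hx ->; rewrite memSS permE; have [cx rx] := tauf_spec x.
  by rewrite cx rx /rix (sp_blockE hB hx) -{1}(sp_blockE hB hx) -/(rix x) col_rix eqxx.
have hBX : colset B \in Xs by rewrite memXs; apply/mem_cf; exists B.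
rewrite memSS nth_index // => /andP[/mem_colset[x hx hcx] /eqP hry].
exists x => //; rewrite permE; apply: A_eq; have [cx rx] := tauf_spec x.
  by rewrite cx.
by rewrite rx hry /rix (sp_blockE hB hx) hcx.
Qed.

Lemma tau_img : spimg tau (val Q) = indexed_sp lam (cf (val Q)).
Proof.
apply/setP => S; apply/imsetP/mem_isp.
  case=> B hB ->; exists (index (colset B) Xs); last exact: img_block.
  by rewrite index_mem memXs; apply/mem_cf; exists B.
case=> r hr ->.
have : nth fset0 Xs r \in cf (val Q) by rewrite -memXs mem_nth.
case/mem_cf => B hB e; exists B => //.
by rewrite img_block // -e index_uniq // XsU.
Qed.

End Constr.

End SP.

Import GRing.Theory.

Lemma ffunMzE (aT : finType) (f : {ffun aT -> int}) (z : int) x : (f *~ z)%R x = (f x *~ z)%R.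
Proof. by case: z => k; rewrite /intmul ?ffunE ffunMnE. Qed.

Lemma tab_val (T : tabloid lam) (g : {perm A}) :
  val (tab_act T (g^-1)%g) = [ffun x => val T (g x)].
Proof.
rewrite /tab_act invgK insubdK // -topredE /=.
apply/forallP => r; rewrite -(eqP (forallP (valP T) r)).
apply/eqP; rewrite -[RHS](card_preimset _ (@perm_inj _ g)); apply: eq_card => x.
by rewrite !inE ffunE.
Qed.

Definition sgnA (t : {perm A}) : int := sgn t.

Lemma polytab_C (s : {perm A}) : s \in Cs ->
  act_M (polytab (1%g : {perm A})) s = (polytab (1%g : {perm A}) *~ sgn s)%R.
Proof.
move=> hs; apply/ffunP => T; rewrite ffunMzE !ffunE tab_val.
rewrite (reindex_inj (mulIg (s^-1)%g)) /= -mulrzr mulr_suml.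
apply: eq_big => [t|t ht].
  rewrite -/Cs; apply/idP/idP => h; last by apply: CM => //; exact: CV.
  by have := CM h hs; rewrite -mulgA mulVg mulg1.
rewrite intz /sgn odd_permM odd_permV signr_addb -!mulrA; congr (_ * _)%R.
rewrite mulrC; congr (_ * _)%R.
set b1 := (_ == _); set b2 := (_ == _); suff -> : b1 = b2 by [].
rewrite /b1 /b2.
apply/eqP/eqP => e.
  apply/ffunP => y; have := congr1 (fun f : {ffun _ -> _} => f ((s^-1)%g y)) e.
  rewrite /= /tabrow !ffunE permKV !invg1 !perm1 => ->.
  by rewrite invMg invgK permM permKV.
apply/ffunP => y; rewrite e /tabrow !ffunE !invg1 !perm1.
by rewrite invMg invgK permM.
Qed.

End Main.

Import GRing.Theory.
Local Open Scope ring_scope.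

Lemma v_sign m n lam (f : Mmod lam -> Hmod m n lam) : is_hom f ->
  forall s, s \in Cs lam ->
  act_H (f (polytab (1%g : {perm Aset lam}))) s = f (polytab (1%g : {perm Aset lam})) *~ sgn s.
Proof.
case=> hadd hact s hs.
set e := polytab _.
have spe : in_specht e.
  by exists 1%N, (fun _ => 1), (fun _ => 1%g); rewrite big_ord1 mulr1z.
have spne : in_specht (- e).
  by exists 1%N, (fun _ => -1), (fun _ => 1%g); rewrite big_ord1 mulrN1z.
have sp0 : in_specht (0 : Mmod lam).
  by exists 0%N, (fun _ => 0), (fun _ => 1%g); rewrite big_ord0.
have f0 : f 0 = 0.
  have := hadd 0 0 sp0 sp0; rewrite addr0 => h.
  by apply: (addrI (f 0)); rewrite addr0 -h.
have fN : f (- e) = - f e.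
  have := hadd e (- e) spe spne; rewrite subrr f0 => h.
  by apply: (addrI (f e)); rewrite -h subrr.
rewrite -hact // polytab_C // /sgn.
by case: (odd_perm s); rewrite ?expr1 ?expr0 ?mulrN1z ?mulr1z.
Qed.

Lemma btH_eval m n lam (q : {set {set Aset lam}}) (P : setpart m n lam) :
  bt_H (delta m n q) P = \sum_(t in Cs lam) ((val (sp_act P (t^-1)%g) == q)%:R *~ sgn t).
Proof. by rewrite /bt_H sum_ffunE; apply: eq_bigr => t _; rewrite ffunMzE !ffunE. Qed.

Local Close Scope ring_scope.

Theorem proposition4p2 (m n : nat) (lam : seq nat) (f : Mmod lam -> Hmod m n lam) :
  odd m -> is_partition lam (m * n) -> is_hom f ->
  exists (k : nat) (Ps : 'I_k -> {fset {fset nat}}) (a : 'I_k -> int),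
    (forall i, family_of m n lam (Ps i)) /\
    f (polytab (1%g : {perm Aset lam})) =
      (\sum_(i < k) bt_H (delta m n (indexed_sp lam (Ps i))) *~ a i)%R.
Proof.
Local Open Scope ring_scope.
move=> om hpart hf.
have lam0 : 0 \notin lam by case/and3P: hpart.
set v := f (polytab _).
have vs : forall (P : setpart m n lam) s, s \in Cs lam -> v (sp_act P s) = v P *~ sgn s.
  move=> P s hs; have := congr1 (fun w : Hmod m n lam => w P) (v_sign hf (CV hs)).
  by rewrite /= ffunE ffunMzE invgK /sgn odd_permV.
have v0 : forall P : setpart m n lam, ~ good (val P) -> v P = 0.
  move=> P ng; have [s [hs os he]] := bad_stab om ng.
  have e : sp_act P s = P by apply: val_inj; rewrite sp_act_val.
  have := vs P s hs; rewrite e /sgn os expr1 mulrN1z => h.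
  lia.
pose L := [seq Q <- enum {: setpart m n lam} | goodb (val Q) && (val Q == indexed_sp lam (cf (val Q)))].
have memL Q : (Q \in L) = goodb (val Q) && (val Q == indexed_sp lam (cf (val Q))).
  by rewrite mem_filter mem_enum /= andbT.
have uL : uniq L by rewrite filter_uniq ?enum_uniq.
exists (size L), (fun i => cf (val (tnth (in_tuple L) i))), (fun i => v (tnth (in_tuple L) i)).
split.
  move=> i; have := mem_tnth i (in_tuple L); rewrite memL => /andP[/goodP g _].
  exact: family_cf.
pose F (Q : setpart m n lam) := bt_H (delta m n (indexed_sp lam (cf (val Q)))) *~ v Q.
have -> : \sum_(i < size L) bt_H (delta m n (indexed_sp lam (cf (val (tnth (in_tuple L) i))))) *~
            v (tnth (in_tuple L) i) = \sum_(Q <- L) F Q.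
  by rewrite [RHS]big_tnth.
rewrite (eq_big_seq (fun Q => bt_H (delta m n (val Q)) *~ v Q)); last first.
  by move=> Q; rewrite memL /F => /andP[_ /eqP <-].
apply/ffunP => P; rewrite sum_ffunE.
under eq_bigr do rewrite ffunMzE btH_eval.
case: (goodP (val P)) => gP; last first.
  rewrite v0 // big1_seq // => Q /andP[_ hQ]; rewrite big1 ?mul0rz // => t ht.
  case: eqP => e; last by rewrite /= mulr0n mul0rz.
  move: hQ; rewrite memL => /andP[/goodP gQ _].
  case: gP; have -> : val P = spimg t (val (sp_act P (t^-1)%g)).
    by rewrite sp_act_val spimg_comp mulVg spimg1.
  by rewrite e; apply: good_img.
set t0 := tau lam0 gP.
have ht0 : t0 \in Cs lam := tau_C lam0 gP.
set U := sp_act P t0.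
have hU : val U = indexed_sp lam (cf (val P)) by rewrite sp_act_val tau_img.
have cU : cf (val U) = cf (val P) by rewrite sp_act_val cf_img.
have UL : U \in L.
  rewrite memL cU hU eqxx andbT; apply/goodP.
  by rewrite -hU /U sp_act_val; apply: good_img.
rewrite (bigD1_seq U UL uL) /= [X in _ + X]big1_seq; last first.
  move=> Q /andP[nQU hQ]; rewrite big1 ?mul0rz // => t ht.
  case: eqP => e; last by rewrite /= mulr0n mul0rz.
  move: hQ; rewrite memL => /andP[_ /eqP eQ].
  have cQ : cf (val Q) = cf (val P).
    by have <- : val (sp_act P (t^-1)%g) = val Q := e; rewrite sp_act_val cf_img // CV.
  by case/eqP: nQU; apply: val_inj; rewrite hU {1}eQ cQ.
rewrite addr0 (bigD1 (t0^-1)%g) /=; last exact: CV.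
rewrite invgK eqxx big1 ?addr0; last first.
  move=> t /andP[ht nt]; case: eqP => e; last by rewrite /= mulr0n mul0rz.
  case/eqP: nt.
  have e' : sp_act P (t^-1 * t0^-1)%g = P.
    rewrite -sp_act_comp.
    have -> : sp_act P (t^-1)%g = U by apply: val_inj.
    by rewrite sp_act_comp mulgV sp_act1.
  have h1 : spimg (t^-1 * t0^-1)%g (val P) = val P by rewrite -sp_act_val e'.
  have h2 := stab_trivial gP (CM (CV ht) (CV ht0)) h1.
  rewrite -[t]invgK; congr (_^-1)%g; apply: (mulIg (t0^-1)%g); by rewrite h2 mulgV.
rewrite vs // /sgn odd_permV !mulrzz.
by rewrite /= mulr1n mul1r mulrCA -expr2 sqrr_sign mulr1.
Qed.
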